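(* Let $S$ be a completely simple semigroup. If $S$ is DSC, then $S$ is a group.
   Context: For a semigroup $S$, a diagonal subsemigroup of $S\times S$ is a subsemigroup of $S\times S$ containing $\Delta=\{(s,s)\colon s\in S\}$. A congruence on $S$ is a diagonal subsemigroup of $S\times S$ that is symmetric and transitive. A semigroup $S$ is DSC if every diagonal subsemigroup of $S\times S$ is a congruence on $S$. An idempotent $e$ of $S$ is primitive if it is minimal in the order $e\le f\iff ef=fe=e$ on idempotents. A semigroup is completely simple if it is simple (has no ideals other than itself) and has a primitive idempotent. *)

(* Defs.v *)
Definition associative {S : Type} (mul : S -> S -> S) : Prop :=
  forall x y z, mul x (mul y z) = mul (mul x y) z.

(* A subset R of S x S (given as a binary relation) is a subsemigroup of
   S x S (componentwise product) containing the diagonal. *)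
Definition diagonal_subsemigroup {S : Type} (mul : S -> S -> S)
  (R : S -> S -> Prop) : Prop :=
  (forall s, R s s) /\
  (forall a b c d, R a b -> R c d -> R (mul a c) (mul b d)).

Definition congruence {S : Type} (mul : S -> S -> S) (R : S -> S -> Prop) : Prop :=
  diagonal_subsemigroup mul R /\
  (forall a b, R a b -> R b a) /\
  (forall a b c, R a b -> R b c -> R a c).

Definition DSC {S : Type} (mul : S -> S -> S) : Prop :=
  forall R : S -> S -> Prop, diagonal_subsemigroup mul R -> congruence mul R.

Definition ideal {S : Type} (mul : S -> S -> S) (I : S -> Prop) : Prop :=
  (exists x, I x) /\ (forall s x, I x -> I (mul s x) /\ I (mul x s)).

Definition simple {S : Type} (mul : S -> S -> S) : Prop :=
  forall I : S -> Prop, ideal mul I -> forall x, I x.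

Definition idempotent {S : Type} (mul : S -> S -> S) (e : S) : Prop :=
  mul e e = e.

Definition idem_le {S : Type} (mul : S -> S -> S) (e f : S) : Prop :=
  mul e f = e /\ mul f e = e.

Definition primitive {S : Type} (mul : S -> S -> S) (e : S) : Prop :=
  idempotent mul e /\
  forall f, idempotent mul f -> idem_le mul f e -> f = e.

Definition completely_simple {S : Type} (mul : S -> S -> S) : Prop :=
  simple mul /\ exists e, primitive mul e.

Definition is_group {S : Type} (mul : S -> S -> S) : Prop :=
  exists e : S, (forall x, mul e x = x /\ mul x e = x) /\
                (forall x, exists y, mul x y = e /\ mul y x = e).

(* Main.v *)
Require Import Defs.
From Stdlib Require Import Setoid.

Section Gen.
Variable S : Type.
Variable mul : S -> S -> S.
Local Infix "*" := mul.
Hypothesis assoc : associative mul.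
Hypothesis HL1 : forall x y, exists u v, y = (u * x) * v.
Variable e : S.
Hypothesis He : e * e = e.
Hypothesis Hprim : forall f, idempotent mul f -> idem_le mul f e -> f = e.
Hypothesis Hdsc : DSC mul.

Ltac norm := repeat rewrite <- assoc.
Lemma lift2 a b c : a * b = c -> forall z, a * (b * z) = c * z.
Proof. intros H z. rewrite assoc, H. reflexivity. Qed.
Lemma lift3 a b c d : a * (b * c) = d -> forall z, a * (b * (c * z)) = d * z.
Proof. intros H z. rewrite <- H. norm. reflexivity. Qed.

Lemma eSe_inv b : e * b = b -> b * e = b ->
  exists w, b * w = e /\ w * b = e /\ e * w = w /\ w * e = w.
Proof.
  intros Hb1 Hb2. destruct (HL1 b e) as [u [v H]].
  set (X := e * (u * e)). set (Y := e * (v * e)).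
  assert (eX : e * X = X) by (unfold X; norm; rewrite (lift2 _ _ _ He); reflexivity).
  assert (Xe : X * e = X) by (unfold X; norm; rewrite He; reflexivity).
  assert (eY : e * Y = Y) by (unfold Y; norm; rewrite (lift2 _ _ _ He); reflexivity).
  assert (Ye : Y * e = Y) by (unfold Y; norm; rewrite He; reflexivity).
  assert (HXbY : X * (b * Y) = e).
  { unfold X, Y. norm. rewrite (lift2 _ _ _ Hb1), (lift2 _ _ _ Hb2).
    assert (H' : u * (b * v) = e) by (rewrite H; norm; reflexivity).
    rewrite (lift3 _ _ _ _ H'), He. exact He. }
  assert (HXbY' : forall z, X * (b * (Y * z)) = e * z).
  { intro z. rewrite <- HXbY. norm. reflexivity. }
  assert (F1 : b * (Y * X) = e).
  { apply Hprim.
    - unfold idempotent. norm. rewrite HXbY', eX. reflexivity.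
    - split.
      + norm. rewrite Xe. reflexivity.
      + rewrite assoc, Hb1. reflexivity. }
  assert (F2 : Y * (X * b) = e).
  { apply Hprim.
    - unfold idempotent. norm. rewrite HXbY', (lift2 _ _ _ Ye). reflexivity.
    - split.
      + norm. rewrite Hb2. reflexivity.
      + rewrite assoc, eY. reflexivity. }
  exists (Y * X). split; [exact F1|]. split; [rewrite <- assoc; exact F2|].
  split; [rewrite assoc, eY; reflexivity | rewrite <- assoc, Xe; reflexivity].
Qed.

Lemma fact1 a c : exists t, a = a * (c * t).
Proof.
  destruct (HL1 e a) as [p [q Ha]]. destruct (HL1 e c) as [r [s Hc]].
  set (s0 := e * s).
  assert (es0 : e * s0 = s0) by (unfold s0; rewrite assoc, He; reflexivity).
  set (g := e * (q * (r * e))).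
  assert (eg : e * g = g) by (unfold g; rewrite assoc, He; reflexivity).
  assert (ge : g * e = g) by (unfold g; norm; rewrite He; reflexivity).
  destruct (eSe_inv g eg ge) as [g' [Hg _]].
  destruct (HL1 s0 e) as [u [v _]].
  set (k := s0 * (v * e)).
  assert (ek : e * k = k) by (unfold k; rewrite assoc, es0; reflexivity).
  assert (ke : k * e = k) by (unfold k; norm; rewrite He; reflexivity).
  destruct (eSe_inv k ek ke) as [k' [Hk _]].
  exists ((v * (e * k')) * (g' * q)).
  assert (Hs : forall W, s0 * (v * (e * (k' * W))) = e * W).
  { intro W. transitivity (k * (k' * W)); [unfold k; norm; reflexivity | apply lift2; exact Hk]. }
  assert (Hgg : forall W, e * (q * (r * (e * (g' * W)))) = e * W).
  { intro W. transitivity (g * (g' * W)); [unfold g; norm; reflexivity | apply lift2; exact Hg]. }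
  rewrite Ha at 2. rewrite Hc.
  assert (E : e * s = e * s0) by (unfold s0; rewrite assoc, He; reflexivity).
  norm. assert (E2 : forall W, e * (s * W) = s0 * W) by (intro W; unfold s0; norm; reflexivity). rewrite E2, Hs, Hgg, Ha. norm. reflexivity.
Qed.

Lemma rdiv x y : exists t, x = y * t.
Proof.
  set (R := fun u v => (exists t, v = u * t) \/
                       ((exists t, u = x * t) /\ (exists t, v = y * t))).
  assert (HR : diagonal_subsemigroup mul R).
  { split.
    - intro u. left. destruct (fact1 u u) as [t Ht]. exists (u * t). exact Ht.
    - intros a b c d [[t Ht] | [[t1 H1] [t2 H2]]] _.
      + left. destruct (fact1 a c) as [t1 H1]. exists (t1 * (t * d)).
        rewrite Ht. rewrite H1 at 1. norm. reflexivity.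
      + right. split.
        * exists (t1 * c). rewrite H1. norm. reflexivity.
        * exists (t2 * d). rewrite H2. norm. reflexivity. }
  destruct (Hdsc R HR) as [_ [Hsym _]].
  assert (Hxy : R x y).
  { right. split.
    - destruct (fact1 x x) as [t Ht]. exists (x * t). exact Ht.
    - destruct (fact1 y y) as [t Ht]. exists (y * t). exact Ht. }
  destruct (Hsym _ _ Hxy) as [H | [_ H]]; exact H.
Qed.
End Gen.

Lemma HL1_of (S : Type) (mul : S -> S -> S) : associative mul -> simple mul ->
  forall x y, exists u v, y = mul (mul u x) v.
Proof.
  intros assoc Hs x. apply (Hs (fun y => exists u v, y = mul (mul u x) v)).
  split.
  - exists (mul (mul x x) x), x, x. reflexivity.
  - intros s z [u [v H]]. split.
    + exists (mul s u), v. rewrite H, !assoc. reflexivity.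
    + exists u, (mul v s). rewrite H, !assoc. reflexivity.
Qed.

Theorem mainTheorem3 (S : Type) (mul : S -> S -> S) :
  associative mul -> completely_simple mul -> DSC mul -> is_group mul.
Proof.
  intros assoc [Hs [e [He Hprim]]] Hdsc.
  pose (fm := fun x y => mul y x).
  assert (HL := HL1_of S mul assoc Hs).
  assert (R1 := rdiv S mul assoc HL e He Hprim Hdsc).
  assert (R2 : forall x y, exists t, x = mul t y).
  { apply (rdiv S fm) with (e := e).
    - intros a b c. unfold fm. symmetry. apply assoc.
    - intros x y. destruct (HL x y) as [u [v H]]. exists v, u. unfold fm.
      rewrite H, assoc. reflexivity.
    - exact He.
    - intros f Hf [H1 H2]. apply Hprim; [exact Hf | split; assumption].
    - intros R [Hr Hc]. destruct (Hdsc R) as [_ [Hsy Htr]].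
      + split; [exact Hr|]. intros a b c d H1 H2. exact (Hc _ _ _ _ H2 H1).
      + split; [split; [exact Hr|] | split; assumption].
        exact Hc. }
  assert (Hid : forall x, mul e x = x /\ mul x e = x).
  { intro x. destruct (R1 x e) as [t Ht]. destruct (R2 x e) as [t' Ht'].
    split.
    - rewrite Ht, assoc. unfold idempotent in He. rewrite He. reflexivity.
    - rewrite Ht', <- assoc. unfold idempotent in He. rewrite He. reflexivity. }
  exists e. split; [exact Hid|].
  intro x. destruct (R1 e x) as [t1 H1]. destruct (R2 e x) as [t2 H2].
  exists t1. split; [symmetry; exact H1|].
  assert (E : t2 = t1).
  { transitivity (mul t2 e). { symmetry. apply Hid. }
    rewrite H1, assoc, <- H2. apply Hid. }
  rewrite <- E. symmetry. exact H2.
Qed.
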